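(* Let $\eta>0$, let $m^1,m^2,\dots\in\mathbb{R}^n$ be arbitrary loss predictions and $\ell^1,\ell^2,\dots\in\mathbb{R}^n$ arbitrary losses, set $x^0=\mathbf{1}/n$ and $v^t=\langle m^t,x^{t-1}\rangle\mathbf{1}-m^t$. (i) The procedure in $\Gamma$ that at each time $t$ takes $\theta^t=\arg\min_{\theta\in\mathbb{R}^n_{\ge0}}\{\langle L^{t-1}-v^t,\theta\rangle+\tfrac{1}{2\eta}\|\theta\|_2^2\}$ with $L^{t-1}=-\sum_{\tau<t}u(x^\tau,\ell^\tau)$ (predictive FTRL on $\mathbb{R}^n_{\ge0}$ with regularizer $\tfrac12\|\cdot\|_2^2$ and prediction $-v^t$) and plays $x^t=g(\theta^t)$ produces exactly the iterates of PRM. (ii) The procedure that sets $z^0=0$, at time $t$ takes $\theta^t=\arg\min_{\theta\in\mathbb{R}^n_{\ge0}}\{\langle -v^t,\theta\rangle+\tfrac{1}{2\eta}\|\theta-z^{t-1}\|_2^2\}$, plays $x^t=g(\theta^t)$, and after observing $\ell^t$ sets $z^t=\arg\min_{z\in\mathbb{R}^n_{\ge0}}\{\langle -u(x^t,\ell^t),z\rangle+\tfrac1{2\eta}\|z-z^{t-1}\|_2^2\}$ (predictive OMD) produces exactly the iterates of PRM$^+$. In both cases the iterates are independent of $\eta$ (with the same fixed point of $\Delta^n$ used whenever $\theta^t=0$). (iii) Both PRM and PRM$^+$ satisfy, for every $T\ge1$ and every $\hat{x}\in\Delta^n$, \[ R^T(\hat{x})=\sum_{t=1}^T\langle\ell^t,x^t-\hat{x}\rangle\le\sqrt2\Big(\sum_{t=1}^T\big\|\langle\ell^t,x^t\rangle\mathbf{1}-\langle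 m^t,x^{t-1}\rangle\mathbf{1}-(\ell^t-m^t)\big\|_2^2\Big)^{1/2}. \]
   Context: $\Delta^n=\{x\in\mathbb{R}^n_{\ge0}:\|x\|_1=1\}$; $\mathbf{1}$ is the all-ones vector; $[\cdot]^+$ is componentwise positive part. The game $\Gamma$ has Player 1 action set $\Delta^n$, Player 2 action set $\mathbb{R}^n$ (loss vectors), target set $\mathbb{R}^n_{\le0}$, and payoff $u(x,\ell)=\langle\ell,x\rangle\mathbf{1}-\ell$. For $a\in\mathbb{R}^n_{\ge0}$, $g(a)=a/\|a\|_1$ if $a\ne0$ and a fixed arbitrary point $\bar{x}\in\Delta^n$ if $a=0$. Predictive regret matching (PRM): $r^0=0$, $x^0=\mathbf{1}/n$; at time $t$, given prediction $m^t$, $\theta^t=[r^{t-1}+\langle m^t,x^{t-1}\rangle\mathbf{1}-m^t]^+$ and $x^t=g(\theta^t)$; after observing $\ell^t$, $r^t=r^{t-1}+\langle\ell^t,x^t\rangle\mathbf{1}-\ell^t$. Predictive regret matching$^+$ (PRM$^+$): $z^0=0$, $x^0=\mathbf{1}/n$; at time $t$, $\theta^t=[z^{t-1}+\langle m^t,x^{t-1}\rangle\mathbf{1}-m^t]^+$ and $x^t=g(\theta^t)$; after observing $\ell^t$, $z^t=[z^{t-1}+\langle\ell^t,x^t\rangle\mathbf{1}-\ell^t]^+$. *)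

(* Defs.v *)
From HB Require Import structures.
From mathcomp Require Import all_boot all_order all_algebra.
From mathcomp Require Import reals.
Set Implicit Arguments. Unset Strict Implicit. Unset Printing Implicit Defensive.
Import Order.TTheory GRing.Theory Num.Theory.
Local Open Scope ring_scope.

Section Defs.
Variables (R : realType) (n : nat).

Definition vec := 'I_n -> R.

Definition dot (x y : vec) : R := \sum_(i < n) x i * y i.
Definition sqnorm2 (x : vec) : R := \sum_(i < n) x i ^+ 2.
Definition norm1 (x : vec) : R := \sum_(i < n) `|x i|.

Definition zerov : vec := fun _ => 0.
Definition onesv : vec := fun _ => 1.
Definition unifv : vec := fun _ => (n%:R)^-1.

Definition in_simplex (x : vec) : Prop :=
  (forall i, 0 <= x i) /\ \sum_(i < n) x i = 1.
Definition nonneg (x : vec) : Prop := forall i, 0 <= x i.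

Definition pos (a : vec) : vec := fun i => Num.max (a i) 0.

Definition g (xbar : vec) (a : vec) : vec :=
  if [forall i, a i == 0] then xbar else fun i => a i / norm1 a.

Definition u (x l : vec) : vec := fun i => dot l x - l i.

Definition is_argmin (f : vec -> R) (S : vec -> Prop) (theta : vec) : Prop :=
  S theta /\ forall theta', S theta' -> f theta <= f theta'.

(* Predictive regret matching: state (r^t, x^t); m t, l t used for t >= 1. *)
Fixpoint prm_state (xbar : vec) (m l : nat -> vec) (t : nat) : vec * vec :=
  match t with
  | 0 => (zerov, unifv)
  | t'.+1 =>
    let: (r, x) := prm_state xbar m l t' in
    let theta := pos (fun i => r i + dot (m t) x - m t i) in
    let x' := g xbar theta in
    ((fun i => r i + dot (l t) x' - l t i), x')
  end.
Definition prm_x xbar m l t : vec := (prm_state xbar m l t).2.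

Fixpoint prmp_state (xbar : vec) (m l : nat -> vec) (t : nat) : vec * vec :=
  match t with
  | 0 => (zerov, unifv)
  | t'.+1 =>
    let: (z, x) := prmp_state xbar m l t' in
    let theta := pos (fun i => z i + dot (m t) x - m t i) in
    let x' := g xbar theta in
    (pos (fun i => z i + dot (l t) x' - l t i), x')
  end.
Definition prmp_x xbar m l t : vec := (prmp_state xbar m l t).2.

Definition regret (x l : nat -> vec) (T : nat) (xhat : vec) : R :=
  \sum_(1 <= t < T.+1) dot (l t) (fun i => x t i - xhat i).

Definition pred_err (x m l : nat -> vec) (T : nat) : R :=
  \sum_(1 <= t < T.+1)
    sqnorm2 (fun i => dot (l t) (x t) - dot (m t) (x t.-1) - (l t i - m t i)).

End Defs.

(* Main.v *)
Require Import Defs.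
From HB Require Import structures.
From mathcomp Require Import all_boot all_order all_algebra.
From mathcomp Require Import reals.
From mathcomp Require Import ring lra.
From Stdlib Require Import FunctionalExtensionality.
Import Order.TTheory GRing.Theory Num.Theory.
Local Open Scope ring_scope.

Lemma scal_key (R : realType) (r v d : R) :
  Num.max (r + v + d) 0 ^+ 2 <= Num.max r 0 ^+ 2 + 2 * Num.max (r + v) 0 * (v + d) + d ^+ 2.
Proof.
case: (lerP (r+v+d) 0) => h1; case: (lerP r 0) => h2; case: (lerP (r+v) 0) => h3;
rewrite ?(maxEle, maxElt) ?h1 ?h2 ?h3 /=; try nra.
Qed.

Lemma argmin_scal (R : realType) (eta c z s : R) : 0 < eta -> 0 <= s ->
  (s - Num.max (z - eta * c) 0) ^+ 2 / (2 * eta) <=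
  (c * s + (2 * eta)^-1 * (s - z) ^+ 2) - (c * Num.max (z - eta * c) 0 + (2 * eta)^-1 * (Num.max (z - eta * c) 0 - z) ^+ 2).
Proof.
move=> he hs.
set k := (2 * eta)^-1.
have hk : k * (2 * eta) = 1 by rewrite mulVf // gt_eqF // mulr_gt0.
have kp : 0 < k by rewrite invr_gt0 mulr_gt0.
case: (lerP (z - eta * c) 0) => h; rewrite ?(maxEle, maxElt) ?h /=.
- have h1 : 0 <= c - 2 * k * z.
    have : 2 * k * z <= 2 * k * (eta * c) by rewrite ler_pM2l ?mulr_gt0 //; lra.
    have -> : 2 * k * (eta * c) = (k * (2 * eta)) * c by ring.
    rewrite hk mul1r.
    lra.
  have : 0 <= s * (c - 2 * k * z) by rewrite mulr_ge0.
  nra.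
- set M := z - eta * c.
  have ez : z = M + eta * c by rewrite /M; ring.
  rewrite ez.
  have : (s - M) * c * (1 - k * (2 * eta)) = 0 by rewrite hk subrr mulr0.
  nra.
Qed.

Lemma argmin_vec (R : realType) (n : nat) (F : vec R n -> R) (c z th : vec R n) (eta : R) :
  0 < eta ->
  (forall t, F t = dot c t + (2 * eta)^-1 * sqnorm2 (fun i => t i - z i)) ->
  is_argmin F (@nonneg R n) th -> forall i, th i = Num.max (z i - eta * c i) 0.
Proof.
move=> he HF [thn thmin].
set ts : vec R n := fun i => Num.max (z i - eta * c i) 0.
have tsn : nonneg ts by move=> i; rewrite /ts le_max lexx orbT.
have E : forall t, F t = \sum_i (c i * t i + (2 * eta)^-1 * (t i - z i) ^+ 2).
  by move=> t; rewrite HF /dot /sqnorm2 mulr_sumr -big_split.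
have H : \sum_i (th i - ts i) ^+ 2 / (2 * eta) <= 0.
  apply: (le_trans (y := \sum_i ((c i * th i + (2 * eta)^-1 * (th i - z i) ^+ 2)
                      - (c i * ts i + (2 * eta)^-1 * (ts i - z i) ^+ 2)))).
    by apply: ler_sum => i _; apply: argmin_scal.
  by rewrite sumrB -!E subr_le0; apply: thmin.
have H0 : \sum_i (th i - ts i) ^+ 2 / (2 * eta) = 0.
  apply/eqP; rewrite eq_le H /=; apply: sumr_ge0 => i _.
  by rewrite divr_ge0 ?sqr_ge0 // mulr_ge0 // ltW.
move=> i.
have nn : forall j, predT j -> 0 <= (th j - ts j) ^+ 2 / (2 * eta).
  by move=> j _; rewrite divr_ge0 ?sqr_ge0 // mulr_ge0 // ltW.
have := @psumr_eq0P _ _ predT (fun j => (th j - ts j) ^+ 2 / (2 * eta)) nn H0 i isT.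
move=> /eqP.
have h2 : 0 < 2 * eta by rewrite mulr_gt0.
by rewrite mulf_eq0 invr_eq0 (gt_eqF h2) orbF sqrf_eq0 subr_eq0 => /eqP.
Qed.

Lemma max_scale (R : realType) (eta a : R) : 0 < eta ->
  Num.max (eta * a) 0 = eta * Num.max a 0.
Proof. by move=> he; rewrite maxr_pMr ?ltW // mulr0. Qed.

Lemma g_scale (R : realType) (n : nat) (xbar a : vec R n) (eta : R) : 0 < eta ->
  g xbar (fun i => eta * a i) = g xbar a.
Proof.
move=> he; rewrite /g.
have -> : [forall i, eta * a i == 0] = [forall i, a i == 0].
  by apply: eq_forallb => i; rewrite mulf_eq0 (gt_eqF he).
case: ifP => // _; apply: functional_extensionality => i.
have -> : norm1 (fun i => eta * a i) = eta * norm1 a.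
  rewrite /norm1 mulr_sumr; apply: eq_bigr => j _.
  by rewrite normrM gtr0_norm.
by rewrite invfM mulrACA mulfV ?gt_eqF // mul1r.
Qed.

Lemma prm_S (R : realType) (n : nat) (xbar : vec R n) m l t :
  prm_state xbar m l t.+1 =
  ((fun i => (prm_state xbar m l t).1 i + dot (l t.+1) (prm_x xbar m l t.+1) - l t.+1 i),
   prm_x xbar m l t.+1) /\
  prm_x xbar m l t.+1 = g xbar (pos (fun i => (prm_state xbar m l t).1 i
                          + dot (m t.+1) (prm_x xbar m l t) - m t.+1 i)).
Proof. by rewrite /prm_x /=; case: (prm_state xbar m l t). Qed.

Lemma prmp_S (R : realType) (n : nat) (xbar : vec R n) m l t :
  prmp_state xbar m l t.+1 =
  (pos (fun i => (prmp_state xbar m l t).1 i + dot (l t.+1) (prmp_x xbar m l t.+1) - l t.+1 i),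
   prmp_x xbar m l t.+1) /\
  prmp_x xbar m l t.+1 = g xbar (pos (fun i => (prmp_state xbar m l t).1 i
                          + dot (m t.+1) (prmp_x xbar m l t) - m t.+1 i)).
Proof. by rewrite /prmp_x /=; case: (prmp_state xbar m l t). Qed.

Lemma prm_r_sum (R : realType) (n : nat) (xbar : vec R n) m l t i :
  (prm_state xbar m l t).1 i = \sum_(1 <= tau < t.+1) u (prm_x xbar m l tau) (l tau) i.
Proof.
elim: t => [|t IH]; first by rewrite big_geq.
have [-> _] := @prm_S _ _ xbar m l t.
by rewrite big_nat_recr //= IH addrA.
Qed.

Lemma partI (R : realType) (n : nat) (xbar : vec R n) (eta : R) (heta : 0 < eta)
  (m l : nat -> vec R n) :
  (forall theta x : nat -> vec R n,
     x 0%N = @unifv R n ->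
     (forall t : nat, (0 < t)%N ->
        is_argmin
          (fun th : vec R n =>
             dot (fun i => - (\sum_(1 <= tau < t) u (x tau) (l tau) i)
                           - (dot (m t) (x t.-1) - m t i)) th
             + (2 * eta)^-1 * sqnorm2 th)
          (@nonneg R n) (theta t)
        /\ x t = g xbar (theta t)) ->
     forall t i, x t i = prm_x xbar m l t i).
Proof.
move=> theta x hx0 H.
suff S : forall t s, (s <= t)%N -> x s = prm_x xbar m l s.
  by move=> t i; rewrite (S t t).
elim=> [|t IH] s.
  by rewrite leqn0 => /eqP ->; rewrite hx0.
rewrite leq_eqVlt => /orP [/eqP ->|]; last by apply: IH.
have [Ha Hx] := H t.+1 isT.
have Hth := @argmin_vec _ _ _ (fun i => - (\sum_(1 <= tau < t.+1) u (x tau) (l tau) i) - (dot (m t.+1) (x t) - m t.+1 i)) (@zerov R n) _ _ heta _ Ha.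
rewrite Hx.
have -> : theta t.+1 = (fun i => eta * pos (fun i => (prm_state xbar m l t).1 i
                          + dot (m t.+1) (prm_x xbar m l t) - m t.+1 i) i).
  apply: functional_extensionality => i.
  rewrite Hth; last first.
    move=> th; congr (_ + _ * _); rewrite /sqnorm2; apply: eq_bigr => j _.
    by rewrite /zerov subr0.
  rewrite /pos -max_scale // /zerov sub0r -mulrN; congr (Num.max (eta * _) 0).
  rewrite prm_r_sum /= (IH t) //.
  have -> : \sum_(1 <= tau < t.+1) u (x tau) (l tau) i
           = \sum_(1 <= tau < t.+1) u (prm_x xbar m l tau) (l tau) i.
    by apply: eq_big_nat => tau /andP [_ ht]; rewrite (IH tau).
  ring.
by rewrite g_scale // (proj2 (@prm_S _ _ xbar m l t)).
Qed.

Lemma partII (R : realType) (n : nat) (xbar : vec R n) (eta : R) (heta : 0 < eta)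
  (m l : nat -> vec R n) :
  (forall theta z x : nat -> vec R n,
     z 0%N = @zerov R n ->
     x 0%N = @unifv R n ->
     (forall t : nat, (0 < t)%N ->
        is_argmin
          (fun th : vec R n =>
             dot (fun i => - (dot (m t) (x t.-1) - m t i)) th
             + (2 * eta)^-1 * sqnorm2 (fun i => th i - z t.-1 i))
          (@nonneg R n) (theta t)
        /\ x t = g xbar (theta t)
        /\ is_argmin
          (fun zz : vec R n =>
             dot (fun i => - u (x t) (l t) i) zz
             + (2 * eta)^-1 * sqnorm2 (fun i => zz i - z t.-1 i))
          (@nonneg R n) (z t)) ->
     forall t i, x t i = prmp_x xbar m l t i).
Proof.
move=> theta z x hz0 hx0 H.
suff S : forall t, x t = prmp_x xbar m l t /\
                   z t = (fun i => eta * (prmp_state xbar m l t).1 i).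
  by move=> t i; rewrite (proj1 (S t)).
elim=> [|t [IHx IHz]].
  split; first by rewrite hx0.
  by rewrite hz0; apply: functional_extensionality => i; rewrite /zerov /= mulr0.
have [Ha [Hx Hz]] := H t.+1 isT.
have Hth := @argmin_vec _ _ _ _ _ _ _ heta (fun _ => erefl) Ha.
have Hzz := @argmin_vec _ _ _ _ _ _ _ heta (fun _ => erefl) Hz.
have [PS PX] := @prmp_S _ _ xbar m l t.
have EX : x t.+1 = prmp_x xbar m l t.+1.
  rewrite Hx PX -[RHS](@g_scale _ _ xbar _ eta heta); congr (g xbar _).
  apply: functional_extensionality => i.
  rewrite Hth /= IHz IHx /pos -max_scale //; congr (Num.max _ 0); ring.
split=> //.
rewrite PS; apply: functional_extensionality => i.
rewrite Hzz /= IHz EX /pos -max_scale //; congr (Num.max _ 0).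
rewrite /u; ring.
Qed.

Lemma ortho (R : realType) (n : nat) (xbar a l : vec R n) : nonneg a ->
  \sum_i a i * u (g xbar a) l i = 0.
Proof.
move=> ha; rewrite /g; case: ifP => [/forallP h0|hn0].
  by apply: big1 => i _; rewrite (eqP (h0 i)) mul0r.
have N1 : norm1 a = \sum_i a i by apply: eq_bigr => i _; rewrite ger0_norm.
have Nn : norm1 a != 0.
  apply/negP => /eqP N0; rewrite N1 in N0.
  have h := @psumr_eq0P _ _ predT a (fun i _ => ha i) N0.
  suff : [forall i, a i == 0] by rewrite hn0.
  by apply/forallP => i; rewrite (h i isT).
rewrite /u /dot.
under eq_bigr => i _ do rewrite mulrBr.
rewrite sumrB -mulr_suml -N1.
have -> : \sum_i l i * (a i / norm1 a) = (\sum_i a i * l i) / norm1 a.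
  by rewrite mulr_suml; apply: eq_bigr => i _; rewrite mulrCA mulrA.
by rewrite (mulrC (norm1 a)) divfK // subrr.
Qed.

Lemma pot_step (R : realType) (n : nat) (r a v d : vec R n) :
  (forall i, a i = r i + v i + d i) ->
  \sum_i Num.max (r i + v i) 0 * (v i + d i) = 0 ->
  \sum_i Num.max (a i) 0 ^+ 2 <= \sum_i Num.max (r i) 0 ^+ 2 + sqnorm2 d.
Proof.
move=> ha h0.
apply: (le_trans (y := \sum_i (Num.max (r i) 0 ^+ 2 + 2 * Num.max (r i + v i) 0 * (v i + d i) + d i ^+ 2))).
  by apply: ler_sum => i _; rewrite ha; apply: scal_key.
rewrite !big_split /=.
have -> : \sum_(i < n) 2 * Num.max (r i + v i) 0 * (v i + d i) = 2 * \sum_i Num.max (r i + v i) 0 * (v i + d i).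
  by rewrite mulr_sumr; apply: eq_bigr => i _; rewrite mulrA.
by rewrite h0 mulr0 addr0 /sqnorm2.
Qed.

Lemma regret_eq (R : realType) (n : nat) (xs l : nat -> vec R n) T (xhat : vec R n) :
  \sum_i xhat i = 1 ->
  regret xs l T xhat = \sum_i xhat i * \sum_(1 <= t < T.+1) u (xs t) (l t) i.
Proof.
move=> h1.
under [RHS]eq_bigr => i _ do rewrite mulr_sumr.
rewrite exchange_big /regret; apply: eq_bigr => t _.
rewrite /u /dot.
under [RHS]eq_bigr => i _ do rewrite mulrBr.
rewrite sumrB -mulr_suml h1 mul1r.
under eq_bigr => i _ do rewrite mulrBr.
by rewrite sumrB; congr (_ - _); apply: eq_bigr => i _; rewrite mulrC.
Qed.

Lemma bound_lemma (R : realType) (n : nat) (q r xhat : vec R n) (P : R) :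
  in_simplex xhat -> (forall i, r i <= q i) ->
  \sum_i Num.max (q i) 0 ^+ 2 <= P ->
  \sum_i xhat i * r i <= Num.sqrt 2 * Num.sqrt P.
Proof.
move=> [xn x1] hrq hP.
have hq : forall i, r i <= Num.sqrt P.
  move=> i; apply: (le_trans (hrq i)); apply: (le_trans (y := Num.max (q i) 0)).
    by rewrite le_max lexx.
  have m0 : 0 <= Num.max (q i) 0 by rewrite le_max lexx orbT.
  rewrite -(ger0_norm m0) -sqrtr_sqr ler_wsqrtr //.
  apply: le_trans hP; rewrite (bigD1 i) //= lerDl.
  by apply: sumr_ge0 => j _; rewrite sqr_ge0.
apply: (le_trans (y := \sum_i xhat i * Num.sqrt P)).
  by apply: ler_sum => i _; rewrite ler_wpM2l.
rewrite -mulr_suml x1 mul1r ler_peMl ?sqrtr_ge0 //.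
apply: (le_trans (y := Num.sqrt 1)); first by rewrite sqrtr1.
by apply: ler_wsqrtr; lra.
Qed.

Lemma pos_nonneg (R : realType) (n : nat) (a : vec R n) : nonneg (pos a).
Proof. by move=> i; rewrite /pos le_max lexx orbT. Qed.

Lemma pred_err_S (R : realType) (n : nat) (x m l : nat -> vec R n) T :
  pred_err x m l T.+1 = pred_err x m l T +
    sqnorm2 (fun i => dot (l T.+1) (x T.+1) - dot (m T.+1) (x T) - (l T.+1 i - m T.+1 i)).
Proof. by rewrite /pred_err big_nat_recr. Qed.

Lemma prm_pot (R : realType) (n : nat) (xbar : vec R n) m l T :
  \sum_i Num.max ((prm_state xbar m l T).1 i) 0 ^+ 2 <= pred_err (prm_x xbar m l) m l T.
Proof.
elim: T => [|T IH].
  rewrite /pred_err big_geq //= /zerov.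
  by rewrite big1 // => i _; rewrite maxxx expr0n.
have [PS PX] := @prm_S _ _ xbar m l T.
rewrite PS pred_err_S /=.
apply: le_trans (@pot_step _ _ (prm_state xbar m l T).1 _
   (fun i => dot (m T.+1) (prm_x xbar m l T) - m T.+1 i)
   (fun i => dot (l T.+1) (prm_x xbar m l T.+1) - dot (m T.+1) (prm_x xbar m l T) - (l T.+1 i - m T.+1 i)) _ _) _.
- by move=> i /=; ring.
- rewrite -[RHS](@ortho _ _ xbar (pos (fun i => (prm_state xbar m l T).1 i
                          + dot (m T.+1) (prm_x xbar m l T) - m T.+1 i)) (l T.+1) (pos_nonneg _ _ _)).
  rewrite -PX; apply: eq_bigr => i _; rewrite /pos /u addrA; congr (_ * _); ring.
- by rewrite lerD2r.
Qed.

Lemma prmp_pot (R : realType) (n : nat) (xbar : vec R n) m l T :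
  \sum_i Num.max ((prmp_state xbar m l T).1 i) 0 ^+ 2 <= pred_err (prmp_x xbar m l) m l T.
Proof.
elim: T => [|T IH].
  rewrite /pred_err big_geq //= /zerov.
  by rewrite big1 // => i _; rewrite maxxx expr0n.
have [PS PX] := @prmp_S _ _ xbar m l T.
rewrite PS pred_err_S /=.
under eq_bigr => i _ do rewrite /pos -maxA maxxx.
apply: le_trans (@pot_step _ _ (prmp_state xbar m l T).1 _
   (fun i => dot (m T.+1) (prmp_x xbar m l T) - m T.+1 i)
   (fun i => dot (l T.+1) (prmp_x xbar m l T.+1) - dot (m T.+1) (prmp_x xbar m l T) - (l T.+1 i - m T.+1 i)) _ _) _.
- by move=> i /=; ring.
- rewrite -[RHS](@ortho _ _ xbar (pos (fun i => (prmp_state xbar m l T).1 i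
                          + dot (m T.+1) (prmp_x xbar m l T) - m T.+1 i)) (l T.+1) (pos_nonneg _ _ _)).
  rewrite -PX; apply: eq_bigr => i _; rewrite /pos /u addrA; congr (_ * _); ring.
- by rewrite lerD2r.
Qed.

Lemma prmp_dom (R : realType) (n : nat) (xbar : vec R n) m l T i :
  \sum_(1 <= t < T.+1) u (prmp_x xbar m l t) (l t) i <= (prmp_state xbar m l T).1 i.
Proof.
elim: T => [|T IH]; first by rewrite big_geq.
have [PS _] := @prmp_S _ _ xbar m l T.
rewrite big_nat_recr // PS /= /pos.
apply: (le_trans (y := (prmp_state xbar m l T).1 i + u (prmp_x xbar m l T.+1) (l T.+1) i)).
  by rewrite lerD2r.
by rewrite /u addrA le_max lexx.
Qed.

Lemma partIII (R : realType) (n : nat) (xbar : vec R n) (m l : nat -> vec R n) :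
  (forall (T : nat) (xhat : vec R n), (1 <= T)%N -> in_simplex xhat ->
     regret (prm_x xbar m l) l T xhat
       <= Num.sqrt 2 * Num.sqrt (pred_err (prm_x xbar m l) m l T))
  /\
  (forall (T : nat) (xhat : vec R n), (1 <= T)%N -> in_simplex xhat ->
     regret (prmp_x xbar m l) l T xhat
       <= Num.sqrt 2 * Num.sqrt (pred_err (prmp_x xbar m l) m l T)).
Proof.
split=> T xhat _ hs.
  rewrite regret_eq; last by case: hs.
  apply: (@bound_lemma _ _ (prm_state xbar m l T).1) => //; last exact: prm_pot.
  by move=> i; rewrite prm_r_sum.
rewrite regret_eq; last by case: hs.
apply: (@bound_lemma _ _ (prmp_state xbar m l T).1) => //; last exact: prmp_pot.
by move=> i; apply: prmp_dom.
Qed.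

Theorem mainTheorem7 (R : realType) (n : nat) (hn : (0 < n)%N)
  (xbar : vec R n) (hxbar : in_simplex xbar)
  (eta : R) (heta : 0 < eta) (m l : nat -> vec R n) :
  (* (i) predictive FTRL produces the iterates of PRM *)
  (forall theta x : nat -> vec R n,
     x 0%N = @unifv R n ->
     (forall t : nat, (0 < t)%N ->
        is_argmin
          (fun th : vec R n =>
             dot (fun i => - (\sum_(1 <= tau < t) u (x tau) (l tau) i)
                           - (dot (m t) (x t.-1) - m t i)) th
             + (2 * eta)^-1 * sqnorm2 th)
          (@nonneg R n) (theta t)
        /\ x t = g xbar (theta t)) ->
     forall t i, x t i = prm_x xbar m l t i)
  /\
  (* (ii) predictive OMD produces the iterates of PRM+ *)
  (forall theta z x : nat -> vec R n,
     z 0%N = @zerov R n ->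
     x 0%N = @unifv R n ->
     (forall t : nat, (0 < t)%N ->
        is_argmin
          (fun th : vec R n =>
             dot (fun i => - (dot (m t) (x t.-1) - m t i)) th
             + (2 * eta)^-1 * sqnorm2 (fun i => th i - z t.-1 i))
          (@nonneg R n) (theta t)
        /\ x t = g xbar (theta t)
        /\ is_argmin
          (fun zz : vec R n =>
             dot (fun i => - u (x t) (l t) i) zz
             + (2 * eta)^-1 * sqnorm2 (fun i => zz i - z t.-1 i))
          (@nonneg R n) (z t)) ->
     forall t i, x t i = prmp_x xbar m l t i)
  /\
  (* (iii) regret bounds for PRM and PRM+ *)
  (forall (T : nat) (xhat : vec R n), (1 <= T)%N -> in_simplex xhat ->
     regret (prm_x xbar m l) l T xhat
       <= Num.sqrt 2 * Num.sqrt (pred_err (prm_x xbar m l) m l T))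
  /\
  (forall (T : nat) (xhat : vec R n), (1 <= T)%N -> in_simplex xhat ->
     regret (prmp_x xbar m l) l T xhat
       <= Num.sqrt 2 * Num.sqrt (pred_err (prmp_x xbar m l) m l T)).
Proof.
split; first exact: partI.
split; first exact: partII.
exact: partIII.
Qed.
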